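(* Let $a,b,c$ be positive numbers with $a<b<c$ and $b-a<c-\lfloor c/b\rfloor b<a$. Then for every $t\in\mathcal S_{a,b,c}$ there is exactly one vector $\mathbf x\in\mathcal B_b^0$ with $\mathbf M_{a,b,c}(t)\mathbf x=\mathbf 1$.
   Context: For $a,b,c>0$ and $t\in\mathbb R$, $\mathbf M_{a,b,c}(t)=(\chi_{[0,c)}(t-\mu+\lambda))_{\mu\in a\mathbb Z,\lambda\in b\mathbb Z}$ is the infinite matrix with rows indexed by $a\mathbb Z$ and columns by $b\mathbb Z$, acting by $(\mathbf M_{a,b,c}(t)\mathbf x)(\mu)=\sum_{\lambda\in b\mathbb Z}\chi_{[0,c)}(t-\mu+\lambda)\mathbf x(\lambda)$. $\mathcal B_b$ is the set of vectors $(\mathbf x(\lambda))_{\lambda\in b\mathbb Z}$ with entries in $\{0,1\}$, and $\mathcal B_b^0=\{\mathbf x\in\mathcal B_b:\mathbf x(0)=1\}$. $\mathbf 1$ denotes the vector indexed by $a\mathbb Z$ with all entries $1$. $\mathcal S_{a,b,c}=\{t\in\mathbb R:\mathbf M_{a,b,c}(t)\mathbf x=\mathbf 1\text{ for some }\mathbf x\in\mathcal B_b^0\}$. *)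

(* Defs.v *)
From Stdlib Require Import Reals Lra ZArith List.
Open Scope R_scope.

Definition chi0c (c s : R) : R :=
  if Rle_dec 0 s then (if Rlt_dec s c then 1 else 0) else 0.

(* A vector indexed by bZ is encoded as a function Z -> R: entry at
   lambda = b*n is x n.  B_b : entries in {0,1}. *)
Definition in_Bb (x : Z -> R) : Prop := forall n : Z, x n = 0 \/ x n = 1.
Definition in_Bb0 (x : Z -> R) : Prop := in_Bb x /\ x 0%Z = 1.

(* Entry (mu, lambda) = (a*m, b*n) of M_{a,b,c}(t). *)
Definition Mentry (a b c t : R) (m n : Z) : R :=
  chi0c c (t - a * IZR m + b * IZR n).

Definition fsum_Z (f : Z -> R) (s : R) : Prop :=
  exists l : list Z, NoDup l /\ (forall n, ~ In n l -> f n = 0) /\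
    fold_right Rplus 0 (map f l) = s.

Definition M_x_eq_1 (a b c t : R) (x : Z -> R) : Prop :=
  forall m : Z, fsum_Z (fun n => Mentry a b c t m n * x n) 1.

Definition S_abc (a b c : R) (t : R) : Prop :=
  exists x, in_Bb0 x /\ M_x_eq_1 a b c t x.

(* Main.v *)
Require Import Defs.
From Stdlib Require Import Reals ZArith.
From Stdlib Require Import Lra Lia List Classical FunctionalExtensionality.
Open Scope R_scope.

Lemma chi_vals c s : chi0c c s = 0 \/ chi0c c s = 1.
Proof. unfold chi0c; destruct (Rle_dec 0 s); [destruct (Rlt_dec s c)|]; auto. Qed.

Lemma chi_one c s : chi0c c s = 1 <-> 0 <= s < c.
Proof.
  unfold chi0c; destruct (Rle_dec 0 s); [destruct (Rlt_dec s c)|]; split; intros; lra.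
Qed.

Lemma fold_nonneg (f : Z -> R) l : (forall n, 0 <= f n) -> 0 <= fold_right Rplus 0 (map f l).
Proof. intros H; induction l; simpl; [lra|]. specialize (H a); lra. Qed.

Lemma fold_ge1 (f : Z -> R) l n : (forall n, 0 <= f n) -> In n l ->
  f n <= fold_right Rplus 0 (map f l).
Proof.
  intros H; induction l; simpl; [tauto|]. intros [<-|Hi].
  - pose proof (fold_nonneg f l H); lra.
  - specialize (IHl Hi); specialize (H a); lra.
Qed.

Lemma fold_ge2 (f : Z -> R) l n1 n2 : (forall n, 0 <= f n) -> NoDup l -> In n1 l -> In n2 l ->
  n1 <> n2 -> f n1 + f n2 <= fold_right Rplus 0 (map f l).
Proof.
  intros H; induction l; simpl; [tauto|]. intros Hnd H1 H2 Hne.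
  inversion Hnd; subst.
  destruct H1 as [<-|H1]; destruct H2 as [<-|H2].
  - congruence.
  - pose proof (fold_ge1 f l n2 H H2); lra.
  - pose proof (fold_ge1 f l n1 H H1); lra.
  - specialize (IHl H5 H1 H2 Hne); specialize (H a); lra.
Qed.

Lemma fold_zero (f : Z -> R) l : (forall n, f n = 0) -> fold_right Rplus 0 (map f l) = 0.
Proof. intros H; induction l; simpl; [lra|]. rewrite H, IHl; lra. Qed.

Lemma fsum01_uniq (f : Z -> R) : (forall n, f n = 0 \/ f n = 1) -> fsum_Z f 1 ->
  forall n1 n2, f n1 = 1 -> f n2 = 1 -> n1 = n2.
Proof.
  intros H01 [l [Hnd [Hout Hsum]]] n1 n2 E1 E2.
  destruct (Z.eq_dec n1 n2) as [e|ne]; auto.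
  assert (Hnn : forall n, 0 <= f n) by (intros n; destruct (H01 n); lra).
  assert (I1 : In n1 l) by (destruct (classic (In n1 l)); auto; rewrite Hout in E1; auto; lra).
  assert (I2 : In n2 l) by (destruct (classic (In n2 l)); auto; rewrite Hout in E2; auto; lra).
  pose proof (fold_ge2 f l n1 n2 Hnn Hnd I1 I2 ne). lra.
Qed.

Lemma fsum01_ex (f : Z -> R) : (forall n, f n = 0 \/ f n = 1) -> fsum_Z f 1 ->
  exists n, f n = 1.
Proof.
  intros H01 [l [Hnd [Hout Hsum]]].
  destruct (classic (exists n, f n = 1)) as [e|ne]; auto.
  exfalso. rewrite fold_zero in Hsum; [lra|].
  intros n; destruct (H01 n); auto. exfalso; apply ne; eauto.
Qed.

Section S.
Variables a b c t : R.
Hypothesis ha : 0 < a.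
Hypothesis hab : a < b.
Hypothesis hac : a < c.

Definition W (m n : Z) : Prop := 0 <= t - a * IZR m + b * IZR n < c.
Definition Sol (x : Z -> R) := in_Bb0 x /\ M_x_eq_1 a b c t x.

Lemma f_vals x m : in_Bb x -> forall n, Mentry a b c t m n * x n = 0 \/ Mentry a b c t m n * x n = 1.
Proof.
  intros Hx n. unfold Mentry. destruct (chi_vals c (t - a * IZR m + b * IZR n)) as [e|e];
  rewrite e; destruct (Hx n) as [e'|e']; rewrite e'; lra.
Qed.

Lemma f_one x m n : in_Bb x -> Mentry a b c t m n * x n = 1 <-> W m n /\ x n = 1.
Proof.
  intros Hx. unfold Mentry, W. rewrite <- chi_one.
  destruct (chi_vals c (t - a * IZR m + b * IZR n)) as [e|e];
  rewrite e; destruct (Hx n) as [e'|e']; rewrite e'; split; intros; lra.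
Qed.

Lemma solE x m : Sol x -> exists n, W m n /\ x n = 1.
Proof.
  intros [[Hb _] HM]. destruct (fsum01_ex _ (f_vals x m Hb) (HM m)) as [n Hn].
  exists n. apply (f_one x m n Hb); auto.
Qed.

Lemma solU x m n1 n2 : Sol x -> W m n1 -> x n1 = 1 -> W m n2 -> x n2 = 1 -> n1 = n2.
Proof.
  intros [[Hb _] HM] W1 X1 W2 X2.
  apply (fsum01_uniq _ (f_vals x m Hb) (HM m)); apply (f_one x m _ Hb); auto.
Qed.

Lemma int_eq (p q : Z) : IZR p - IZR q < 1 -> IZR q - IZR p < 1 -> p = q.
Proof.
  intros H1 H2. rewrite <- minus_IZR in H1, H2.
  apply lt_IZR in H1; apply lt_IZR in H2. lia.
Qed.

Lemma close_int (p q : Z) : b * IZR p - b * IZR q < b -> b * IZR q - b * IZR p < b -> p = q.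
Proof.
  intros H1 H2. apply int_eq.
  - destruct (Rlt_dec (IZR p - IZR q) 1); auto. exfalso.
    assert (b * 1 <= b * (IZR p - IZR q)) by (apply Rmult_le_compat_l; lra). lra.
  - destruct (Rlt_dec (IZR q - IZR p) 1); auto. exfalso.
    assert (b * 1 <= b * (IZR q - IZR p)) by (apply Rmult_le_compat_l; lra). lra.
Qed.

Definition Agree x y m := forall h1 h2, W m h1 -> x h1 = 1 -> W m h2 -> y h2 = 1 -> h1 = h2.

Lemma agree_step x y m : Sol x -> Sol y -> Agree x y m -> Agree x y (m + 1) /\ Agree x y (m - 1).
Proof.
  intros Sx Sy A.
  destruct (solE x m Sx) as [n [Wn Xn]].
  destruct (solE y m Sy) as [n' [Wn' Yn']].
  pose proof (A n n' Wn Xn Wn' Yn') as <-.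
  split; intros h1 h2 W1 X1 W2 Y2.
  - destruct (classic (W (m+1) n)) as [Wn1|nW].
    + rewrite <- (solU x (m+1) n h1 Sx Wn1 Xn W1 X1).
      apply (solU y (m+1) n h2 Sy Wn1 Yn' W2 Y2).
    + assert (N1 : ~ W m h1) by (intro Wh; apply nW; rewrite (solU x m n h1 Sx Wn Xn Wh X1); auto).
      assert (N2 : ~ W m h2) by (intro Wh; apply nW; rewrite (solU y m n h2 Sy Wn Yn' Wh Y2); auto).
      unfold W in *. rewrite plus_IZR in *.
      assert (c <= t - a * IZR m + b * IZR h1) by (destruct (Rle_dec 0 (t - a * IZR m + b * IZR h1)); [destruct (Rlt_dec (t - a * IZR m + b * IZR h1) c)|]; [exfalso; apply N1; lra|lra|]; exfalso; nra).
      assert (c <= t - a * IZR m + b * IZR h2) by (destruct (Rle_dec 0 (t - a * IZR m + b * IZR h2)); [destruct (Rlt_dec (t - a * IZR m + b * IZR h2) c)|]; [exfalso; apply N2; lra|lra|]; exfalso; nra).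
      apply close_int; nra.
  - destruct (classic (W (m-1) n)) as [Wn1|nW].
    + rewrite <- (solU x (m-1) n h1 Sx Wn1 Xn W1 X1).
      apply (solU y (m-1) n h2 Sy Wn1 Yn' W2 Y2).
    + assert (N1 : ~ W m h1) by (intro Wh; apply nW; rewrite (solU x m n h1 Sx Wn Xn Wh X1); auto).
      assert (N2 : ~ W m h2) by (intro Wh; apply nW; rewrite (solU y m n h2 Sy Wn Yn' Wh Y2); auto).
      unfold W in *. rewrite minus_IZR in *.
      assert (c <= t - a * (IZR m - 1) + b * IZR n) by nra.
      assert (t - a * IZR m + b * IZR h1 < 0) by (destruct (Rle_dec 0 (t - a * IZR m + b * IZR h1)); [exfalso; apply N1; nra|lra]).
      assert (t - a * IZR m + b * IZR h2 < 0) by (destruct (Rle_dec 0 (t - a * IZR m + b * IZR h2)); [exfalso; apply N2; nra|lra]).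
      apply close_int; nra.
Qed.

Lemma row_exists u : exists m : Z, 0 <= u - a * IZR m < a.
Proof.
  exists (up (u / a) - 1)%Z. rewrite minus_IZR.
  destruct (archimed (u / a)) as [H1 H2].
  assert (E : u = a * (u / a)) by (field; lra).
  split; nra.
Qed.

Lemma uniq_sol x y : Sol x -> Sol y -> y = x.
Proof.
  intros Sx Sy.
  destruct (row_exists t) as [m0 Hm0].
  assert (W0 : W m0 0) by (unfold W; simpl; lra).
  assert (A0 : Agree x y m0).
  { intros h1 h2 W1 X1 W2 Y2.
    rewrite <- (solU x m0 0 h1 Sx W0 (proj2 (proj1 Sx)) W1 X1).
    apply (solU y m0 0 h2 Sy W0 (proj2 (proj1 Sy)) W2 Y2). }
  assert (Aall : forall k, Agree x y (m0 + k)).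
  { intros k; induction k using Z.peano_ind.
    - rewrite Z.add_0_r; auto.
    - rewrite <- Z.add_1_r, Z.add_assoc. apply agree_step; auto.
    - rewrite <- Z.sub_1_r, Z.add_sub_assoc. apply agree_step; auto. }
  assert (Aall' : forall m, Agree x y m).
  { intros m. replace m with (m0 + (m - m0))%Z by lia. apply Aall. }
  apply functional_extensionality; intros n.
  destruct (row_exists (t + b * IZR n)) as [m Hm].
  assert (Wm : W m n) by (unfold W; lra).
  destruct (proj1 (proj1 Sx) n) as [ex|ex]; destruct (proj1 (proj1 Sy) n) as [ey|ey];
    try congruence.
  - destruct (solE x m Sx) as [h [Wh Xh]].
    pose proof (Aall' m h n Wh Xh Wm ey) as ->. lra.
  - destruct (solE y m Sy) as [h [Wh Yh]].
    pose proof (Aall' m n h Wm ex Wh Yh) as ->. lra.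
Qed.

End S.

Theorem proposition3p9 (a b c : R) :
  0 < a -> 0 < b -> 0 < c -> a < b -> b < c ->
  b - a < c - IZR (Int_part (c / b)) * b ->
  c - IZR (Int_part (c / b)) * b < a ->
  forall t : R, S_abc a b c t ->
  exists x : Z -> R, (in_Bb0 x /\ M_x_eq_1 a b c t x) /\
    forall y : Z -> R, in_Bb0 y /\ M_x_eq_1 a b c t y -> y = x.
Proof.
  intros ha hb hc hab hbc _ _ t [x Hx].
  exists x; split; auto.
  intros y Hy. apply (uniq_sol a b c t ha hab); try lra; auto.
Qed.
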